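(* Let $X\in\mathbb{R}^{n\times p}$ be a fixed matrix with rows $X_1^\top,\dots,X_n^\top$, let $\beta\in\mathbb{R}^p$, let $\epsilon$ be a random vector in $\mathbb{R}^n$, and let $D\subset\mathbb{R}^p$. Let $G:\mathbb{R}^n\to\mathbb{R}$ be a function, and let $\psi=(\psi_1,\dots,\psi_n)$, $\varphi=(\varphi_1,\dots,\varphi_n)$ with each $\psi_i,\varphi_i:\mathbb{R}\to\mathbb{R}$. Fix $q\in(0,1)$ and $c_0>0$. Suppose: (i) there is $c_1>0$ such that $$\Pr\Big\{|\langle \epsilon,\varphi(Xv)-\varphi(X\beta)\rangle|\le c_1\sqrt{n}\,\|v-\beta\|_1 \text{ for all } v\in D\Big\}\ge 1-c_0q;$$ (ii) there is $c_2>0$ such that $G(\psi(Xv)-\psi(X\beta))\ge c_2 n\|v-\beta\|_2^2$ for all $v\in D$. Let $c_r=2c_1\sqrt{n}$ and suppose $\hat\beta\in D$ is a random variable that always satisfies $$G(\psi(X\hat\beta)-\psi(X\beta))\le 2|\langle\epsilon,\varphi(X\hat\beta)-\varphi(X\beta)\rangle| - c_r(\|\hat\beta\|_1-\|\beta\|_1).$$ Then, with $\kappa_r=4c_1/c_2$, $$\Pr\Big\{\|\hat\beta-\beta\|_2\le \kappa_r\sqrt{|\mathrm{spt}(\beta)|/n}\Big\}\ge 1-c_0q.$$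
   Context: For functions $g_1,\dots,g_n:\mathbb{R}\to\mathbb{R}$, $g=(g_1,\dots,g_n)$ and $x\in\mathbb{R}^n$, write $g(x)=(g_1(x_1),\dots,g_n(x_n))^\top$. For $v\in\mathbb{R}^p$, $\|v\|_a$ is the $\ell_a$-norm, and $\mathrm{spt}(v)=\{i: v_i\neq 0\}$ is the support of $v$, with $|\mathrm{spt}(v)|$ its cardinality. $\langle\cdot,\cdot\rangle$ is the Euclidean inner product on $\mathbb{R}^n$. *)

(* Defs.v *)
From HB Require Import structures.
From mathcomp Require Import all_boot all_order all_algebra.
From mathcomp Require Import all_classical all_reals all_analysis.
Set Implicit Arguments. Unset Strict Implicit. Unset Printing Implicit Defensive.
Import Order.TTheory GRing.Theory Num.Theory.
Local Open Scope ring_scope.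

Definition matvec (R : realType) (n p : nat) (X : 'M[R]_(n, p)) (v : 'I_p -> R)
  : 'I_n -> R := fun i => \sum_(j < p) X i j * v j.

Definition compapp (R : realType) (n : nat) (g : 'I_n -> R -> R) (x : 'I_n -> R)
  : 'I_n -> R := fun i => g i (x i).

Definition vsub (R : realType) (k : nat) (x y : 'I_k -> R) : 'I_k -> R :=
  fun i => x i - y i.

Definition inner (R : realType) (n : nat) (x y : 'I_n -> R) : R :=
  \sum_(i < n) x i * y i.

Definition norm1 (R : realType) (k : nat) (v : 'I_k -> R) : R :=
  \sum_(i < k) `|v i|.
Definition norm2 (R : realType) (k : nat) (v : 'I_k -> R) : R :=
  Num.sqrt (\sum_(i < k) v i ^+ 2).

Definition spt (R : realType) (k : nat) (v : 'I_k -> R) : {set 'I_k} :=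
  [set i | v i != 0].

(* Main.v *)
Require Import Defs.
From HB Require Import structures.
From mathcomp Require Import all_boot all_order all_algebra.
From mathcomp Require Import all_classical all_reals all_analysis.
From mathcomp Require Import ring lra.
Import Order.TTheory GRing.Theory Num.Theory.
Local Open Scope ring_scope.

Lemma l1_supp (R : realType) (p : nat) (b bh : 'I_p -> R) :
  norm1 (vsub bh b) - norm1 bh + norm1 b <=
  2 * \sum_(i in spt b) `|vsub bh b i|.
Proof.
rewrite /norm1 -sumrB -big_split /= mulr_sumr [in X in _ <= X]big_mkcond /=.
apply: ler_sum => i _; rewrite /spt inE /vsub.
case: eqP => [->|_]; first by rewrite subr0 normr0 addr0 subrr.
have e : bh i - (bh i - b i) = b i by lra.
have := ler_normB (bh i) (bh i - b i); rewrite e => h.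
rewrite /=.
lra.
Qed.

Lemma cs_supp (R : realType) (k : nat) (S : {set 'I_k}) (x : 'I_k -> R) :
  \sum_(i in S) `|x i| <= Num.sqrt #|S|%:R * norm2 x.
Proof.
rewrite /norm2 -sqrtrM; last by rewrite ler0n.
rewrite -(ger0_norm (sumr_ge0 _ (fun i _ => normr_ge0 (x i)))) -sqrtr_sqr.
rewrite ler_sqrt; last by apply: mulr_ge0; [rewrite ler0n|apply: sumr_ge0 => i _; rewrite sqr_ge0].
apply: (@le_trans _ _ (#|S|%:R * \sum_(i in S) x i ^+ 2)); last first.
  apply: ler_wpM2l; first by rewrite ler0n.
  rewrite [leRHS](bigID (mem S)) /= lerDl; apply: sumr_ge0 => i _; exact: sqr_ge0.
rewrite expr2 mulr_suml.
apply: (@le_trans _ _ (\sum_(i in S) \sum_(j in S) (x i ^+ 2 + x j ^+ 2) / 2)).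
  apply: ler_sum => i _; rewrite mulr_sumr; apply: ler_sum => j _.
  rewrite -normrM ler_pdivlMr // -(real_normK (num_real (x i))) -(real_normK (num_real (x j))).
  have := sqr_ge0 (`|x i| - `|x j|); rewrite normrM; nra.
have inner : forall i, \sum_(j in S) (x i ^+ 2 + x j ^+ 2) / 2 =
   (#|S|%:R * x i ^+ 2 + \sum_(j in S) x j ^+ 2) / 2.
  by move=> i; rewrite -mulr_suml big_split /= sumr_const mulr_natl.
rewrite (eq_bigr _ (fun i _ => inner i)) -mulr_suml big_split /= sumr_const -mulr_sumr.
rewrite -mulr_natl !mulr1 le_eqVlt; apply/orP; left; apply/eqP; by field.
Qed.

Lemma key (R : realType) (n p : nat) (b bh : 'I_p -> R) (c1 c2 g I : R) :
  (0 < n)%N -> 0 < c1 -> 0 < c2 ->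
  c2 * n%:R * norm2 (vsub bh b) ^+ 2 <= g ->
  g <= 2 * `|I| - 2 * c1 * Num.sqrt n%:R * (norm1 bh - norm1 b) ->
  `|I| <= c1 * Num.sqrt n%:R * norm1 (vsub bh b) ->
  norm2 (vsub bh b) <= 4 * c1 / c2 * Num.sqrt (#|spt b|%:R / n%:R).
Proof.
move=> n0 c10 c20 hG1 hG2 hI.
have hS := @l1_supp _ _ b bh.
have hC := @cs_supp _ _ (spt b) (vsub bh b).
set N := norm2 (vsub bh b) in hG1 hC *.
set m := Num.sqrt n%:R in hG2 hI *.
set r := Num.sqrt #|spt b|%:R in hC.
set Sg := \sum_(i in spt b) _ in hS hC.
have m0 : 0 < m by rewrite sqrtr_gt0 ltr0n.
have nm : n%:R = m ^+ 2 by rewrite sqr_sqrtr // ler0n.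
have N0 : 0 <= N by exact: sqrtr_ge0.
have r0 : 0 <= r by exact: sqrtr_ge0.
set a := c1 * m in hG2 hI.
have a0 : 0 < a by rewrite mulr_gt0.
have hA := ler_wpM2l (ltW a0) hS.
have hB := ler_wpM2l (ltW a0) hC.
have h1 : c2 * m ^+ 2 * N ^+ 2 <= 4 * a * (r * N).
  rewrite -nm.
  have e1 : 2 * c1 * m * (norm1 bh - norm1 b) = 2 * (a * norm1 bh) - 2 * (a * norm1 b) by rewrite /a; ring.
  have e2 : a * (norm1 (vsub bh b) - norm1 bh + norm1 b) = a * norm1 (vsub bh b) - a * norm1 bh + a * norm1 b by ring.
  have e3 : a * (2 * Sg) = 2 * (a * Sg) by ring.
  have e4 : 4 * a * (r * N) = 4 * (a * (r * N)) by ring.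
  rewrite e4; rewrite e1 in hG2; rewrite e2 e3 in hA; lra.
have -> : Num.sqrt (#|spt b|%:R / n%:R) = r / m.
  by rewrite sqrtrM ?ler0n // sqrtrV // ler0n.
have -> : 4 * c1 / c2 * (r / m) = 4 * c1 * r / (c2 * m) by field; apply/andP; split; apply: lt0r_neq0.
rewrite ler_pdivlMr ?mulr_gt0 //.
have [->|Npos] := eqVneq N 0; first by rewrite mul0r mulr_ge0 // mulr_ge0 // ltW.
have Np : 0 < N by rewrite lt0r Npos.
have : (N * (c2 * m)) * (m * N) <= (4 * c1 * r) * (m * N).
  move: h1; rewrite /a; set u := N * (c2 * m); set v := 4 * c1 * r.
  have -> : u * (m * N) = c2 * m ^+ 2 * N ^+ 2 by rewrite /u; ring.
  by have -> : v * (m * N) = 4 * (c1 * m) * (r * N) by rewrite /v; ring.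
by rewrite ler_pM2r ?mulr_gt0.
Qed.

Local Open Scope classical_set_scope.
Local Open Scope ring_scope.

Theorem proposition2p1 (R : realType) (d : measure_display) (T : measurableType d)
  (P : probability T R) (n p : nat) (X : 'M[R]_(n, p)) (beta : 'I_p -> R)
  (eps : T -> 'I_n -> R) (D : set ('I_p -> R)) (G : ('I_n -> R) -> R)
  (psi phi : 'I_n -> R -> R) (q c0 : R) (betahat : T -> 'I_p -> R) :
  (0 < n)%N ->
  0 < q < 1 -> 0 < c0 ->
  (forall i : 'I_n, measurable_fun setT (fun w => eps w i)) ->
  (forall j : 'I_p, measurable_fun setT (fun w => betahat w j)) ->
  (forall w, D (betahat w)) ->
  forall c1 c2 : R, 0 < c1 -> 0 < c2 ->
  let Ei := [set w | forall v, D v ->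
       `|inner (eps w) (vsub (compapp phi (matvec X v)) (compapp phi (matvec X beta)))|
         <= c1 * Num.sqrt n%:R * norm1 (vsub v beta)] in
  measurable Ei ->
  ((1 - c0 * q)%:E <= P Ei)%E ->
  (forall v, D v ->
     G (vsub (compapp psi (matvec X v)) (compapp psi (matvec X beta)))
       >= c2 * n%:R * norm2 (vsub v beta) ^+ 2) ->
  let c_r := 2 * c1 * Num.sqrt n%:R in
  (forall w,
     G (vsub (compapp psi (matvec X (betahat w))) (compapp psi (matvec X beta)))
       <= 2 * `|inner (eps w) (vsub (compapp phi (matvec X (betahat w)))
                                    (compapp phi (matvec X beta)))|
          - c_r * (norm1 (betahat w) - norm1 beta)) ->
  let kappa_r := 4 * c1 / c2 in
  let Ef := [set w | norm2 (vsub (betahat w) beta)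
                  <= kappa_r * Num.sqrt (#|spt beta|%:R / n%:R)] in
  ((1 - c0 * q)%:E <= P Ef)%E.
Proof.
intros n0 _ _ _ mbh Dbh c1 c2 c10 c20 Ei mEi PEi HG cr Hhat. cbv zeta. set kr := 4 * c1 / c2. set Ef := [set w | _].
set K := kr * Num.sqrt (#|spt beta|%:R / n%:R).
have K0 : 0 <= K by rewrite /K /kr mulr_ge0 ?sqrtr_ge0 // divr_ge0 // ltW // mulr_gt0.
set f := fun w => \sum_(i < p) vsub (betahat w) beta i ^+ 2.
have Efe : Ef = (fun w => f w <= K ^+ 2) @^-1` [set true].
  rewrite /Ef; apply/funext => w /=; apply/propext.
  rewrite /norm2 -[X in _ <= X](ger0_norm K0) -sqrtr_sqr ler_sqrt ?sqr_ge0 //.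
have mf : measurable_fun setT f.
  apply: measurable_sum => i; apply: measurable_realfun.measurable_funX.
  exact: (measurable_realfun.measurable_funB (mbh i) (measurable_cst _)).
have mEf : measurable Ef.
  have mt : measurable [set true] by [].
  have := measurable_realfun.measurable_fun_ler mf (measurable_cst (K ^+ 2)) measurableT mt.
  by rewrite setTI Efe.
apply: (le_trans PEi); apply: le_measure; rewrite ?inE //.
move=> w Ew; rewrite /Ef /=.
have Dw := Dbh w.
have h1 := HG _ Dw. have h2 := Hhat w. have h3 := Ew _ Dw. rewrite /cr in h2. rewrite /kr. exact: (@key _ _ _ _ _ _ _ _ _ n0 c10 c20 h1 h2 h3).
Qed.
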